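(* Let $X$ be a complex Banach space, $\alpha>0$ and $T\in\mathcal{B}(X)$ a $(C,\alpha)$-bounded operator. Then $\|T^j\|=O(j^\alpha)$ as $j\to\infty$. Moreover, if $(a(j))_{j\ge0}$ is a complex sequence with $\sum_{j\ge0}j^\alpha|a(j)|<\infty$, then $\sum_{j\ge0}a(j)T^j$ converges in operator norm and $\theta_\alpha(a)=\sum_{j=0}^\infty a(j)T^j$.
   Context: For $\gamma\in\mathbb{R}$, $k^\gamma(0)=1$, $k^\gamma(n)=\frac{\gamma(\gamma+1)\cdots(\gamma+n-1)}{n!}$ for $n\ge1$. For $T\in\mathcal{B}(X)$, $\Delta^{-\alpha}\mathcal{T}(n)=\sum_{j=0}^nk^\alpha(n-j)T^j$, $M_T^\alpha(n)=\Delta^{-\alpha}\mathcal{T}(n)/k^{\alpha+1}(n)$; $T$ is $(C,\alpha)$-bounded if $\sup_n\|M_T^\alpha(n)\|<\infty$. For a sequence $f$ on $\mathbb{N}_0$ (extended by zero): $W_+f(n)=f(n)-f(n+1)$, $W_+^m$ its powers; for $\alpha>0$, $W_+^{-\alpha}f(n)=\sum_{j\ge n}k^\alpha(j-n)f(j)$, $W_+^\alpha f=W_+^mW_+^{-(m-\alpha)}f$ with $m=[\alpha]+1$. For $f$ with $\sum_{n\ge0}k^{\alpha+1}(n)|W_+^\alpha f(n)|<\infty$, $\theta_\alpha(f)=\sum_{n=0}^\infty W_+^\alpha f(n)\,\Delta^{-\alpha}\mathcal{T}(n)$ (norm convergent). *)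

(* Defs.v *)
From Stdlib Require Import Reals Lra Lia ZArith Classical ClassicalEpsilon
  FunctionalExtensionality.
Open Scope R_scope.
Set Implicit Arguments.

Record Cplx : Type := mkC { Cre : R; Cim : R }.
Definition C0 : Cplx := mkC 0 0.
Definition C1 : Cplx := mkC 1 0.
Definition RtoC (r : R) : Cplx := mkC r 0.
Definition Cadd (a b : Cplx) : Cplx := mkC (Cre a + Cre b) (Cim a + Cim b).
Definition Copp (a : Cplx) : Cplx := mkC (- Cre a) (- Cim a).
Definition Csub (a b : Cplx) : Cplx := Cadd a (Copp b).
Definition Cmul (a b : Cplx) : Cplx :=
  mkC (Cre a * Cre b - Cim a * Cim b) (Cre a * Cim b + Cim a * Cre b).
Definition Cmod (a : Cplx) : R := sqrt (Cre a * Cre a + Cim a * Cim a).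

Fixpoint Csum (u : nat -> Cplx) (n : nat) : Cplx :=
  match n with
  | O => u O
  | S p => Cadd (Csum u p) (u (S p))
  end.

Definition Cconv (u : nat -> Cplx) (l : Cplx) : Prop :=
  forall eps, eps > 0 -> exists N, forall n, (n >= N)%nat -> Cmod (Csub (u n) l) < eps.

(* value of the series sum_{i>=0} u i when it converges (0 otherwise) *)
Definition Cseries (u : nat -> Cplx) : Cplx :=
  match excluded_middle_informative (exists l, Cconv (Csum u) l) with
  | left h => proj1_sig (constructive_indefinite_description _ h)
  | right _ => C0
  end.

Record CBanach : Type := {
  cb_car :> Type;
  cb_zero : cb_car;
  cb_add : cb_car -> cb_car -> cb_car;
  cb_opp : cb_car -> cb_car;
  cb_scal : Cplx -> cb_car -> cb_car;
  cb_norm : cb_car -> R;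
  cb_add_assoc : forall x y z, cb_add x (cb_add y z) = cb_add (cb_add x y) z;
  cb_add_comm : forall x y, cb_add x y = cb_add y x;
  cb_add_zero : forall x, cb_add x cb_zero = x;
  cb_add_opp : forall x, cb_add x (cb_opp x) = cb_zero;
  cb_scal_one : forall x, cb_scal C1 x = x;
  cb_scal_assoc : forall a b x, cb_scal a (cb_scal b x) = cb_scal (Cmul a b) x;
  cb_scal_addv : forall a x y, cb_scal a (cb_add x y) = cb_add (cb_scal a x) (cb_scal a y);
  cb_scal_adds : forall a b x, cb_scal (Cadd a b) x = cb_add (cb_scal a x) (cb_scal b x);
  cb_norm_nonneg : forall x, 0 <= cb_norm x;
  cb_norm_eq0 : forall x, cb_norm x = 0 -> x = cb_zero;
  cb_norm_scal : forall a x, cb_norm (cb_scal a x) = Cmod a * cb_norm x;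
  cb_norm_triangle : forall x y, cb_norm (cb_add x y) <= cb_norm x + cb_norm y;
  cb_complete : forall u : nat -> cb_car,
    (forall eps, eps > 0 -> exists N, forall m n, (m >= N)%nat -> (n >= N)%nat ->
        cb_norm (cb_add (u m) (cb_opp (u n))) < eps) ->
    exists l, forall eps, eps > 0 -> exists N, forall n, (n >= N)%nat ->
        cb_norm (cb_add (u n) (cb_opp l)) < eps
}.

Section Ops.
Variable X : CBanach.
Local Notation "x + y" := (cb_add X x y).

Definition vsub (x y : X) : X := cb_add X x (cb_opp X y).

Definition is_bounded_op (T : X -> X) : Prop :=
  (forall x y, T (x + y) = T x + T y) /\
  (forall (a : Cplx) x, T (cb_scal X a x) = cb_scal X a (T x)) /\
  (exists M, forall x, cb_norm X (T x) <= M * cb_norm X (x)).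

(* operator norm: ||S|| = sup { ||S x|| : ||x|| <= 1 } (0 if the sup does not exist) *)
Definition opnorm (S : X -> X) : R :=
  let E := fun r => exists x, cb_norm X (x) <= 1 /\ r = cb_norm X (S x) in
  match excluded_middle_informative (exists l, is_lub E l) with
  | left h => proj1_sig (constructive_indefinite_description _ h)
  | right _ => 0
  end.

Definition opsub (S U : X -> X) : X -> X := fun x => vsub (S x) (U x).
Definition opscal (a : Cplx) (S : X -> X) : X -> X := fun x => cb_scal X a (S x).

Definition oppow (T : X -> X) (j : nat) : X -> X := Nat.iter j T.

Fixpoint opsum (F : nat -> X -> X) (n : nat) : X -> X :=
  match n with
  | O => F O
  | S p => fun x => opsum F p x + F (S p) x
  end.

Definition opseries_conv (F : nat -> X -> X) (S : X -> X) : Prop :=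
  Un_cv (fun n => opnorm (opsub (opsum F n) S)) 0.
End Ops.
Arguments vsub {X}. Arguments is_bounded_op {X}. Arguments opnorm {X}.
Arguments opsub {X}. Arguments opscal {X}. Arguments oppow {X}.
Arguments opsum {X}. Arguments opseries_conv {X}.

(* k^g(0) = 1, k^g(n) = g(g+1)...(g+n-1)/n! *)
Fixpoint kC (g : R) (n : nat) : R :=
  match n with
  | O => 1
  | S p => kC g p * (g + INR p) / INR (S p)
  end.

Definition DeltaT (X : CBanach) (a : R) (T : X -> X) (n : nat) : X -> X :=
  opsum (fun j => opscal (RtoC (kC a (n - j)%nat)) (oppow T j)) n.

Arguments DeltaT {X}.

Definition MT (X : CBanach) (a : R) (T : X -> X) (n : nat) : X -> X :=
  opscal (RtoC (/ kC (a + 1) n)) (DeltaT a T n).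

Arguments MT {X}.

Definition Ca_bounded (X : CBanach) (a : R) (T : X -> X) : Prop :=
  exists K, forall n, opnorm (MT a T n) <= K.

Arguments Ca_bounded {X}.

Definition Wp (f : nat -> Cplx) : nat -> Cplx := fun n => Csub (f n) (f (S n)).

Definition Wneg (b : R) (f : nat -> Cplx) : nat -> Cplx :=
  fun n => Cseries (fun i => Cmul (RtoC (kC b i)) (f (n + i)%nat)).

(* m = [a] + 1  (up a = floor a + 1) *)
Definition mfrac (a : R) : nat := Z.to_nat (up a).

Definition Walpha (a : R) (f : nat -> Cplx) : nat -> Cplx :=
  Nat.iter (mfrac a) Wp (Wneg (INR (mfrac a) - a) f).

(* j^a for natural j (with 0^a = 0, a > 0) *)
Definition npow (j : nat) (a : R) : R :=
  match j with O => 0 | _ => Rpower (INR j) a end.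

Definition Rsummable (u : nat -> R) : Prop := exists l, Un_cv (sum_f_R0 u) l.

(* Main.v *)
Require Import Defs.
From Stdlib Require Import Reals Lra Lia ZArith Classical ClassicalEpsilon FunctionalExtensionality.
Open Scope R_scope.

Lemma sum_shift_front (f : nat -> R) n :
  sum_f_R0 f (S n) = f O + sum_f_R0 (fun i => f (S i)) n.
Proof.
  induction n; simpl. ring. simpl in IHn. rewrite IHn. ring.
Qed.

Lemma sum_nonneg (f : nat -> R) n : (forall i, (i <= n)%nat -> 0 <= f i) -> 0 <= sum_f_R0 f n.
Proof.
  induction n; intros H; simpl. apply H; lia.
  apply Rplus_le_le_0_compat. apply IHn; intros; apply H; lia. apply H; lia.
Qed.

Lemma sum_mono_n (f : nat -> R) n m : (forall i, 0 <= f i) -> (n <= m)%nat ->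
  sum_f_R0 f n <= sum_f_R0 f m.
Proof.
  intros H Hnm; induction Hnm. lra. simpl. specialize (H (S m)). lra.
Qed.

Lemma sum_rev (f : nat -> R) n : sum_f_R0 (fun i => f (n - i)%nat) n = sum_f_R0 f n.
Proof.
  revert f; induction n; intros f. simpl; reflexivity.
  rewrite sum_shift_front. replace (S n - 0)%nat with (S n) by lia.
  simpl (S n - S _)%nat.
  change (fun i : nat => f (S n - S i)%nat) with (fun i : nat => f (n - i)%nat).
  rewrite IHn. simpl. ring.
Qed.

Lemma sum_rect (f : nat -> nat -> R) N J :
  sum_f_R0 (fun n => sum_f_R0 (fun j => f n j) J) N =
  sum_f_R0 (fun j => sum_f_R0 (fun n => f n j) N) J.
Proof.
  induction N; simpl. reflexivity. rewrite IHN. rewrite plus_sum. reflexivity.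
Qed.

Lemma sum_shift_le (h : nat -> R) N j : (forall i, 0 <= h i) ->
  sum_f_R0 (fun n => h (n + j)%nat) N <= sum_f_R0 h (N + j).
Proof.
  revert h; induction j; intros h Hh.
  - rewrite Nat.add_0_r. right. apply sum_eq. intros; f_equal; lia.
  - replace (N + S j)%nat with (S (N + j)) by lia. rewrite sum_shift_front.
    assert (0 <= h O) by auto.
    eapply Rle_trans; [|apply Rplus_le_compat_l; apply (IHj (fun i => h (S i))); auto].
    replace (sum_f_R0 (fun n : nat => h (n + S j)%nat) N) with
      (sum_f_R0 (fun n : nat => h (S (n + j))%nat) N). lra.
    apply sum_eq; intros; f_equal; lia.
Qed.

Lemma INR_S_pos n : 0 < INR (S n).
Proof. apply lt_0_INR; lia. Qed.

Lemma kC_S g p : kC g (S p) = kC g p * (g + INR p) / INR (S p).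
Proof. reflexivity. Qed.

Lemma kshift a n : kC a (S n) = kC (a + 1) n * a / INR (S n).
Proof.
  induction n.
  - rewrite kC_S. simpl. field.
  - rewrite kC_S, IHn, (kC_S (a+1) n). rewrite !S_INR.
    assert (0 <= INR n) by apply pos_INR. field. lra.
Qed.

Lemma kpascal g i : kC g (S i) = kC g i + kC (g - 1) (S i).
Proof.
  rewrite (kshift (g-1)). replace (g - 1 + 1) with g by ring.
  rewrite kC_S. rewrite S_INR. assert (0 <= INR i) by apply pos_INR. field. lra.
Qed.

Lemma kC0_S n : kC 0 (S n) = 0.
Proof. induction n. rewrite kC_S; simpl; field. rewrite kC_S, IHn. field. apply not_0_INR; lia. Qed.

Lemma kC_O g : kC g O = 1.
Proof. reflexivity. Qed.

Lemma vandermonde a b n :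
  sum_f_R0 (fun i => kC a i * kC b (n - i)) n = kC (a + b) n.
Proof.
  induction n.
  - simpl. ring.
  - assert (Hrec : INR (S n) * sum_f_R0 (fun i => kC a i * kC b (S n - i)) (S n) =
                   (a + b + INR n) * sum_f_R0 (fun i => kC a i * kC b (n - i)) n).
    { transitivity (sum_f_R0 (fun i => INR i * kC a i * kC b (S n - i)) (S n) +
                    sum_f_R0 (fun i => kC a i * (INR (S n - i) * kC b (S n - i))) (S n)).
      { rewrite <- plus_sum, scal_sum. apply sum_eq. intros i Hi.
        rewrite minus_INR by lia. ring. }
      rewrite sum_shift_front. rewrite tech5.
      replace (S n - S n)%nat with O by lia. simpl INR at 1. simpl INR at 3.
      transitivity (sum_f_R0 (fun i => (a + INR i) * kC a i * kC b (n - i)) n +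
                    sum_f_R0 (fun i => kC a i * ((b + INR (n - i)) * kC b (n - i))) n).
      { assert (E1 : sum_f_R0 (fun i => INR (S i) * kC a (S i) * kC b (S n - S i)) n
                = sum_f_R0 (fun i => (a + INR i) * kC a i * kC b (n - i)) n).
        { apply sum_eq; intros i Hi. rewrite kC_S. simpl (S n - S i)%nat.
          field. apply not_0_INR; lia. }
        assert (E2 : sum_f_R0 (fun i => kC a i * (INR (S n - i) * kC b (S n - i))) n
                = sum_f_R0 (fun i => kC a i * ((b + INR (n - i)) * kC b (n - i))) n).
        { apply sum_eq; intros i Hi. replace (S n - i)%nat with (S (n - i)) by lia.
          rewrite kC_S. field. apply not_0_INR; lia. }
        rewrite E1, E2. ring. }
      rewrite <- plus_sum, scal_sum. apply sum_eq. intros i Hi.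
      rewrite minus_INR by lia. ring. }
    rewrite IHn in Hrec. rewrite kC_S.
    apply (Rmult_eq_reg_l (INR (S n))). rewrite Hrec. field. apply not_0_INR; lia.
    apply not_0_INR; lia.
Qed.

Lemma ln_le_sub1 y : 0 < y -> ln y <= y - 1.
Proof.
  intros Hy. destruct (Rle_or_lt (ln y) (y - 1)) as [H|H]; auto.
  apply exp_increasing in H. rewrite exp_ln in H by auto.
  pose proof (exp_ineq1_le (y - 1)). lra.
Qed.

Lemma nat_above x : exists N : nat, x <= INR N.
Proof.
  destruct (archimed x) as [H1 H2].
  destruct (Z_le_gt_dec 0 (up x)) as [Hz|Hz].
  - exists (Z.to_nat (up x)). rewrite INR_IZR_INZ, Z2Nat.id by auto. lra.
  - exists O. simpl. apply Z.gt_lt in Hz. apply IZR_lt in Hz. lra.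
Qed.

Lemma term_le_sum (f : nat -> R) i n : (forall j, 0 <= f j) -> (i <= n)%nat -> f i <= sum_f_R0 f n.
Proof.
  intros H Hi; induction Hi.
  - destruct i; simpl. lra. pose proof (sum_nonneg f i (fun j _ => H j)). lra.
  - simpl. specialize (H (S m)). lra.
Qed.

Lemma kC_bounded g : g <= 1 -> exists C, forall i, Rabs (kC g i) <= C.
Proof.
  intros Hg. destruct (nat_above (-g)) as [N HN].
  exists (sum_f_R0 (fun j => Rabs (kC g j)) N).
  intros i. induction i.
  - apply (term_le_sum (fun j => Rabs (kC g j))). intros; apply Rabs_pos. lia.
  - destruct (le_lt_dec (S i) N) as [Hi|Hi].
    + apply (term_le_sum (fun j => Rabs (kC g j))). intros; apply Rabs_pos. lia.
    + rewrite kC_S. unfold Rdiv. rewrite !Rabs_mult.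
      assert (HI : INR N <= INR i) by (apply le_INR; lia).
      assert (0 < INR (S i)) by apply INR_S_pos.
      rewrite S_INR in *.
      rewrite (Rabs_right (g + INR i)) by lra.
      rewrite (Rabs_right (/ (INR i + 1))) by (apply Rle_ge; left; apply Rinv_0_lt_compat; lra).
      assert (0 <= (g + INR i) * / (INR i + 1) <= 1).
      { split. apply Rmult_le_pos. lra. left; apply Rinv_0_lt_compat; lra.
        apply (Rmult_le_reg_r (INR i + 1)). lra. rewrite Rmult_assoc, Rinv_l by lra. lra. }
      pose proof (Rabs_pos (kC g i)). nra.
Qed.

Section KA.
Variable A : R.
Hypothesis HA : 0 < A.

Lemma kp_pos n : 0 < kC (A + 1) n.
Proof.
  induction n. simpl; lra. rewrite kC_S. pose proof (pos_INR n). pose proof (INR_S_pos n).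
  unfold Rdiv. apply Rmult_lt_0_compat. apply Rmult_lt_0_compat; lra. apply Rinv_0_lt_compat; lra.
Qed.

Lemma kp_le_S n : kC (A + 1) n <= kC (A + 1) (S n).
Proof.
  rewrite kC_S. pose proof (kp_pos n). pose proof (pos_INR n). rewrite S_INR.
  apply (Rmult_le_reg_r (INR n + 1)). lra. unfold Rdiv. rewrite Rmult_assoc, Rinv_l by lra. nra.
Qed.

Lemma kp_mono n m : (n <= m)%nat -> kC (A + 1) n <= kC (A + 1) m.
Proof. intros H; induction H. lra. pose proof (kp_le_S m). lra. Qed.

Lemma kp_exp n : kC (A + 1) (S n) <= exp A * npow (S n) A.
Proof.
  unfold npow, Rpower. rewrite <- exp_plus.
  induction n.
  - rewrite kC_S. replace (INR 1) with 1 by reflexivity. rewrite ln_1. replace (INR 0) with 0 by reflexivity.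
    pose proof (exp_ineq1_le A). rewrite kC_O.
    replace (A + A * 0) with A by ring. replace (1 * (A + 1 + 0) / 1) with (1 + A) by field. lra.
  - rewrite kC_S.
    set (m := INR (S n)). assert (Hm : 0 < m) by apply INR_S_pos.
    replace (INR (S (S n))) with (m + 1) by (unfold m; rewrite (S_INR (S n)); ring).
    set (d := ln (m + 1) - ln m).
    assert (Hd : / (m + 1) <= d).
    { unfold d. assert (ln m = ln (m / (m + 1)) + ln (m + 1)).
      { rewrite <- ln_mult. f_equal. field. lra. apply Rdiv_lt_0_compat; lra. lra. }
      pose proof (ln_le_sub1 (m / (m + 1)) ltac:(apply Rdiv_lt_0_compat; lra)).
      replace (m / (m + 1) - 1) with (- / (m + 1)) in H0 by (field; lra). lra. }
    assert (E : exp (A + A * ln (m + 1)) = exp (A + A * ln m) * exp (A * d)).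
    { rewrite <- exp_plus. f_equal. unfold d. ring. }
    rewrite E.
    assert (1 + A / (m + 1) <= exp (A * d)).
    { pose proof (exp_ineq1_le (A * d)). assert (A / (m+1) <= A * d). 
      unfold Rdiv. apply Rmult_le_compat_l; lra. lra. }
    pose proof (kp_pos (S n)).
    replace (kC (A + 1) (S n) * (A + 1 + m) / (m + 1)) with (kC (A + 1) (S n) * (1 + A / (m + 1))) by (field; lra).
    apply Rmult_le_compat. lra. pose proof (Rdiv_lt_0_compat A (m+1) HA ltac:(lra)). lra.
    exact IHn. exact H.
Qed.

Lemma kn_bound : exists B, 0 <= B /\ forall n, sum_f_R0 (fun i => Rabs (kC (- A) i)) n <= B.
Proof.
  destruct (nat_above A) as [N0 HN0].
  set (s := fun n => sum_f_R0 (fun i => Rabs (kC (- A) i)) n).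
  set (g := fun n => Rabs (kC (1 - A) n)).
  assert (Hinv : forall k, s (k + N0)%nat + g (k + N0)%nat = s N0 + g N0).
  { induction k. reflexivity. rewrite <- IHk. replace (S k + N0)%nat with (S (k + N0)) by lia. unfold s; rewrite tech5.
    fold (s (k + N0)%nat). unfold g.
    rewrite (kshift (- A)). replace (- A + 1) with (1 - A) by ring.
    rewrite kC_S.
    set (n := (k + N0)%nat).
    assert (Hn : INR N0 <= INR n) by (apply le_INR; unfold n; lia).
    pose proof (INR_S_pos n). rewrite S_INR in *.
    unfold Rdiv; rewrite !Rabs_mult.
    rewrite (Rabs_left (-A)) by lra. rewrite (Rabs_right (1 - A + INR n)) by lra.
    rewrite (Rabs_right (/ (INR n + 1))) by (apply Rle_ge; left; apply Rinv_0_lt_compat; lra).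
    field_simplify; [|lra]. field; lra. }
  exists (s N0 + g N0). split.
  { unfold s, g. pose proof (Rabs_pos (kC (1 - A) N0)).
    pose proof (sum_nonneg (fun i => Rabs (kC (- A) i)) N0 (fun i _ => Rabs_pos _)). lra. }
  intros n. fold (s n). destruct (le_lt_dec N0 n) as [Hn|Hn].
  - replace n with ((n - N0) + N0)%nat by lia. rewrite <- (Hinv (n - N0)%nat).
    unfold g. pose proof (Rabs_pos (kC (1 - A) (n - N0 + N0))). lra.
  - unfold s. eapply Rle_trans. apply sum_mono_n. intros; apply Rabs_pos. apply (Nat.lt_le_incl _ _ Hn).
    fold (s N0). unfold g. pose proof (Rabs_pos (kC (1 - A) N0)). lra.
Qed.

End KA.

Lemma Cext (a b : Cplx) : Cre a = Cre b -> Cim a = Cim b -> a = b.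
Proof. destruct a, b; simpl; intros; subst; reflexivity. Qed.

Lemma Rabs_maj2 x : - x <= Rabs x.
Proof. rewrite <- Rabs_Ropp. apply Rle_abs. Qed.

Ltac Csolve := apply Cext; simpl; ring.

Lemma sqrt_sq_le P : 0 <= P -> sqrt P * sqrt P = P.
Proof. intros; apply sqrt_sqrt; auto. Qed.

Lemma Cmod_ge0 a : 0 <= Cmod a.
Proof. apply sqrt_pos. Qed.

Lemma Cmod_sq a : Cmod a * Cmod a = Cre a * Cre a + Cim a * Cim a.
Proof. unfold Cmod. apply sqrt_sqrt. nra. Qed.

Lemma Cmod_RtoC r : Cmod (RtoC r) = Rabs r.
Proof. unfold Cmod, RtoC; simpl. rewrite <- sqrt_Rsqr_abs. f_equal. unfold Rsqr; ring. Qed.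

Lemma Cmod_C0 : Cmod C0 = 0.
Proof. unfold C0. change (mkC 0 0) with (RtoC 0). rewrite Cmod_RtoC. apply Rabs_R0. Qed.

Lemma Cmod_eq_sq a b : 0 <= b -> Cmod a * Cmod a = b * b -> Cmod a = b.
Proof. intros Hb H. pose proof (Cmod_ge0 a). nra. Qed.

Lemma Cmod_mul a b : Cmod (Cmul a b) = Cmod a * Cmod b.
Proof.
  apply Cmod_eq_sq. apply Rmult_le_pos; apply Cmod_ge0.
  rewrite Cmod_sq. replace (Cmod a * Cmod b * (Cmod a * Cmod b)) with
    ((Cmod a * Cmod a) * (Cmod b * Cmod b)) by ring. rewrite !Cmod_sq.
  destruct a, b; simpl; ring.
Qed.

Lemma Cmod_opp a : Cmod (Copp a) = Cmod a.
Proof. unfold Cmod; destruct a; simpl; f_equal; ring. Qed.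

Lemma Cmod_triangle a b : Cmod (Cadd a b) <= Cmod a + Cmod b.
Proof.
  pose proof (Cmod_ge0 a). pose proof (Cmod_ge0 b). pose proof (Cmod_ge0 (Cadd a b)).
  pose proof (Cmod_sq a). pose proof (Cmod_sq b). pose proof (Cmod_sq (Cadd a b)).
  set (p := Cmod a) in *. set (q := Cmod b) in *. set (r := Cmod (Cadd a b)) in *.
  simpl in H4.
  set (x1 := Cre a) in *. set (x2 := Cre b) in *. set (y1 := Cim a) in *. set (y2 := Cim b) in *.
  assert (Hpq : x1 * x2 + y1 * y2 <= p * q).
  { assert ((p*q)*(p*q) >= (x1 * x2 + y1 * y2) * (x1 * x2 + y1 * y2)).
    { replace ((p*q)*(p*q)) with ((p*p)*(q*q)) by ring. rewrite H2, H3. pose proof (Rle_0_sqr (x1*y2 - x2*y1)). unfold Rsqr in *. nra. }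
    assert (0 <= p * q) by nra. nra. }
  assert (r * r <= (p + q) * (p + q)).
  { rewrite H4. replace ((x1 + x2) * (x1 + x2) + (y1 + y2) * (y1 + y2)) with
      ((x1 * x1 + y1 * y1) + (x2 * x2 + y2 * y2) + 2 * (x1 * x2 + y1 * y2)) by ring.
    rewrite <- H2, <- H3. lra. }
  destruct (Rle_or_lt r (p + q)); auto. nra.
Qed.

Lemma Cmod_Re a : Rabs (Cre a) <= Cmod a.
Proof.
  pose proof (Cmod_sq a). pose proof (Cmod_ge0 a). 
  destruct (Rle_or_lt (Rabs (Cre a)) (Cmod a)); auto.
  assert (Rabs (Cre a) * Rabs (Cre a) = Cre a * Cre a) by (rewrite <- Rabs_mult; apply Rabs_right; nra).
  nra.
Qed.

Lemma Cmod_Im a : Rabs (Cim a) <= Cmod a.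
Proof.
  pose proof (Cmod_sq a). pose proof (Cmod_ge0 a).
  destruct (Rle_or_lt (Rabs (Cim a)) (Cmod a)); auto.
  assert (Rabs (Cim a) * Rabs (Cim a) = Cim a * Cim a) by (rewrite <- Rabs_mult; apply Rabs_right; nra).
  nra.
Qed.

Lemma Cmod_le_ReIm a : Cmod a <= Rabs (Cre a) + Rabs (Cim a).
Proof.
  pose proof (Cmod_sq a). pose proof (Cmod_ge0 a). pose proof (Rabs_pos (Cre a)). pose proof (Rabs_pos (Cim a)).
  assert (Rabs (Cre a) * Rabs (Cre a) = Cre a * Cre a) by (rewrite <- Rabs_mult; apply Rabs_right; nra).
  assert (Rabs (Cim a) * Rabs (Cim a) = Cim a * Cim a) by (rewrite <- Rabs_mult; apply Rabs_right; nra).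
  nra.
Qed.

Lemma Cmod_eq0 a : Cmod a = 0 -> a = C0.
Proof.
  intros H. pose proof (Cmod_Re a). pose proof (Cmod_Im a). rewrite H in *.
  apply Cext; simpl. pose proof (Rle_abs (Cre a)). pose proof (Rabs_maj2 (Cre a)). lra.
  pose proof (Rle_abs (Cim a)). pose proof (Rabs_maj2 (Cim a)). lra.
Qed.

Lemma Cmod_sub_triangle a b c : Cmod (Csub a c) <= Cmod (Csub a b) + Cmod (Csub b c).
Proof.
  replace (Csub a c) with (Cadd (Csub a b) (Csub b c)) by Csolve. apply Cmod_triangle.
Qed.

Lemma Cmod_sub_sym a b : Cmod (Csub a b) = Cmod (Csub b a).
Proof. replace (Csub a b) with (Copp (Csub b a)) by Csolve. apply Cmod_opp. Qed.

Lemma Csum_ext (u v : nat -> Cplx) n : (forall i, (i <= n)%nat -> u i = v i) -> Csum u n = Csum v n.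
Proof. induction n; intros H; simpl. apply H; lia. rewrite IHn by (intros; apply H; lia). rewrite H by lia. reflexivity. Qed.

Lemma Csum_add (u v : nat -> Cplx) n : Csum (fun i => Cadd (u i) (v i)) n = Cadd (Csum u n) (Csum v n).
Proof. induction n; simpl. reflexivity. rewrite IHn. Csolve. Qed.

Lemma Csum_Re u n : Cre (Csum u n) = sum_f_R0 (fun i => Cre (u i)) n.
Proof. induction n; simpl. reflexivity. rewrite IHn. reflexivity. Qed.

Lemma Csum_Im u n : Cim (Csum u n) = sum_f_R0 (fun i => Cim (u i)) n.
Proof. induction n; simpl. reflexivity. rewrite IHn. reflexivity. Qed.

Lemma Csum_mod u n : Cmod (Csum u n) <= sum_f_R0 (fun i => Cmod (u i)) n.
Proof. induction n; simpl. lra. pose proof (Cmod_triangle (Csum u n) (u (S n))). lra. Qed.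

Lemma Csum_zero_after (u : nat -> Cplx) M n : (M <= n)%nat -> (forall i, (M < i)%nat -> u i = C0) ->
  Csum u n = Csum u M.
Proof.
  intros Hn H; induction Hn. reflexivity. simpl. rewrite IHHn, H by lia. Csolve.
Qed.

Lemma Cconv_split u l : Cconv u l <-> (Un_cv (fun n => Cre (u n)) (Cre l) /\ Un_cv (fun n => Cim (u n)) (Cim l)).
Proof.
  split.
  - intros H; split; intros e He; destruct (H e He) as [N HN]; exists N; intros n Hn;
      specialize (HN n Hn); unfold Rdist, Rminus.
    + pose proof (Cmod_Re (Csub (u n) l)). simpl in H0. lra.
    + pose proof (Cmod_Im (Csub (u n) l)). simpl in H0. lra.
  - intros [H1 H2] e He. destruct (H1 (e/2) ltac:(lra)) as [N1 HN1].
    destruct (H2 (e/2) ltac:(lra)) as [N2 HN2]. exists (N1 + N2)%nat. intros n Hn.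
    specialize (HN1 n ltac:(lia)). specialize (HN2 n ltac:(lia)). unfold Rdist, Rminus in *.
    pose proof (Cmod_le_ReIm (Csub (u n) l)). simpl in H. lra.
Qed.

Lemma Cconv_unique u l1 l2 : Cconv u l1 -> Cconv u l2 -> l1 = l2.
Proof.
  rewrite !Cconv_split. intros [A1 B1] [A2 B2]. apply Cext.
  eapply UL_sequence; eauto. eapply UL_sequence; eauto.
Qed.

Lemma Cseries_eq u l : Cconv (Csum u) l -> Cseries u = l.
Proof.
  intros H. unfold Cseries. destruct excluded_middle_informative as [h|h].
  - destruct constructive_indefinite_description as [l' Hl']. simpl. eapply Cconv_unique; eauto.
  - exfalso; apply h; eauto.
Qed.

Lemma Cconv_add u v l1 l2 : Cconv u l1 -> Cconv v l2 -> Cconv (fun n => Cadd (u n) (v n)) (Cadd l1 l2).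
Proof.
  rewrite !Cconv_split. intros [A1 B1] [A2 B2]. split; simpl.
  apply CV_plus; auto. apply CV_plus; auto.
Qed.

Lemma Cconv_sub u v l1 l2 : Cconv u l1 -> Cconv v l2 -> Cconv (fun n => Csub (u n) (v n)) (Csub l1 l2).
Proof.
  rewrite !Cconv_split. intros [A1 B1] [A2 B2]. split; simpl.
  apply CV_minus; auto. apply CV_minus; auto.
Qed.

Lemma Cconv_S u l : Cconv (fun n => u (S n)) l -> Cconv u l.
Proof. intros H e He. destruct (H e He) as [N HN]. exists (S N). intros n Hn.
  destruct n. lia. apply HN. lia. Qed.

Lemma Cconv_of_S u l : Cconv u l -> Cconv (fun n => u (S n)) l.
Proof. intros H e He. destruct (H e He) as [N HN]. exists N. intros n Hn. apply HN. lia. Qed.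

Lemma Cconv_ext u v l : (forall n, u n = v n) -> Cconv u l -> Cconv v l.
Proof. intros E H e He. destruct (H e He) as [N HN]. exists N. intros n Hn. rewrite <- E. auto. Qed.

Lemma Cconv_const_after u M : (forall n, (M <= n)%nat -> u n = u M) -> Cconv u (u M).
Proof. intros H e He. exists M. intros n Hn. rewrite H by auto. replace (Csub (u M) (u M)) with C0 by Csolve.
  rewrite Cmod_C0. lra. Qed.

Lemma Rseries_abs_cv (f : nat -> R) (c : nat -> R) M :
  (forall i, Rabs (f i) <= c i) -> (forall n, sum_f_R0 c n <= M) ->
  exists l, Un_cv (sum_f_R0 f) l.
Proof.
  intros Hf HM.
  assert (Hc : forall i, 0 <= c i) by (intros i; pose proof (Hf i); pose proof (Rabs_pos (f i)); lra).
  destruct (growing_cv (sum_f_R0 c)) as [lc Hlc].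
  { intros n; simpl; pose proof (Hc (S n)); lra. }
  { exists M; intros x [n ->]; auto. }
  destruct (growing_cv (sum_f_R0 (fun i => f i + c i))) as [ld Hld].
  { intros n; simpl. pose proof (Hf (S n)). pose proof (Rabs_pos (f (S n))).
    assert (0 <= f (S n) + c (S n)) by (apply Rabs_le_between in H || idtac; pose proof (Rabs_maj2 (f (S n))); lra). lra. }
  { exists (2 * M); intros x [n ->]. rewrite plus_sum. pose proof (HM n).
    assert (sum_f_R0 f n <= sum_f_R0 c n). apply sum_Rle. intros; pose proof (Hf n0); pose proof (Rle_abs (f n0)); lra.
    lra. }
  exists (ld - lc). eapply Un_cv_ext. 2: apply (CV_minus _ _ _ _ Hld Hlc).
  intros n; simpl. rewrite plus_sum. ring.
Qed.

Lemma Cseries_abs_cv (u : nat -> Cplx) M :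
  (forall n, sum_f_R0 (fun i => Cmod (u i)) n <= M) -> exists l, Cconv (Csum u) l.
Proof.
  intros H.
  destruct (Rseries_abs_cv (fun i => Cre (u i)) (fun i => Cmod (u i)) M) as [l1 H1]; auto.
  intros; apply Cmod_Re.
  destruct (Rseries_abs_cv (fun i => Cim (u i)) (fun i => Cmod (u i)) M) as [l2 H2]; auto.
  intros; apply Cmod_Im.
  exists (mkC l1 l2). apply Cconv_split; simpl. split.
  eapply Un_cv_ext; [|exact H1]. intros; rewrite Csum_Re; reflexivity.
  eapply Un_cv_ext; [|exact H2]. intros; rewrite Csum_Im; reflexivity.
Qed.

Lemma Cconv_mod u l : Cconv u l -> Un_cv (fun n => Cmod (u n)) (Cmod l).
Proof.
  intros H e He. destruct (H e He) as [N HN]. exists N. intros n Hn. specialize (HN n Hn).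
  unfold Rdist. pose proof (Cmod_triangle (Csub (u n) l) l). pose proof (Cmod_triangle (Csub l (u n)) (u n)).
  replace (Cadd (Csub (u n) l) l) with (u n) in H0 by Csolve.
  replace (Cadd (Csub l (u n)) (u n)) with l in H1 by Csolve.
  rewrite Cmod_sub_sym in H1. apply Rabs_def1; lra.
Qed.

Section Vec.
Context {X : CBanach}.
Local Notation "x +v y" := (cb_add X x y) (at level 50, left associativity).
Local Notation vz := (cb_zero X).
Local Notation nrm := (cb_norm X).
Local Notation sc := (cb_scal X).
Local Notation vop := (cb_opp X).

Lemma vadd_0_l x : vz +v x = x.
Proof. rewrite cb_add_comm. apply cb_add_zero. Qed.

Lemma vadd_cancel_l x y z : x +v y = x +v z -> y = z.
Proof.
  intros H. rewrite <- (vadd_0_l y), <- (vadd_0_l z).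
  rewrite <- (cb_add_opp X x). rewrite (cb_add_comm X x (vop x)).
  rewrite <- !cb_add_assoc. rewrite H. reflexivity.
Qed.

Lemma vscal_C0 x : sc C0 x = vz.
Proof.
  apply (vadd_cancel_l (sc C0 x)). rewrite cb_add_zero.
  rewrite <- cb_scal_adds. f_equal. apply Cext; simpl; ring.
Qed.

Lemma vscal_zero a : sc a vz = vz.
Proof. rewrite <- (vscal_C0 vz) at 1. rewrite cb_scal_assoc. replace (Cmul a C0) with C0 by Csolve. apply vscal_C0. Qed.

Lemma vopp_scal x : vop x = sc (RtoC (-1)) x.
Proof.
  apply (vadd_cancel_l x). rewrite cb_add_opp. rewrite <- (cb_scal_one X x) at 1.
  rewrite <- cb_scal_adds. rewrite <- (vscal_C0 x). f_equal. apply Cext; simpl; ring.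
Qed.

Lemma vnorm_zero : nrm vz = 0.
Proof. rewrite <- (vscal_C0 vz), cb_norm_scal, Cmod_C0. ring. Qed.

Lemma vnorm_opp x : nrm (vop x) = nrm x.
Proof. rewrite vopp_scal, cb_norm_scal, Cmod_RtoC. replace (Rabs (-1)) with 1 by (unfold Rabs; destruct Rcase_abs; lra). ring. Qed.

Lemma vnorm_scalR r x : nrm (sc (RtoC r) x) = Rabs r * nrm x.
Proof. rewrite cb_norm_scal, Cmod_RtoC. reflexivity. Qed.

Lemma vopp_add x y : vop (x +v y) = vop x +v vop y.
Proof. rewrite !vopp_scal. apply cb_scal_addv. Qed.

Lemma vopp_opp x : vop (vop x) = x.
Proof. rewrite !vopp_scal, cb_scal_assoc. rewrite <- (cb_scal_one X x) at 2. f_equal. apply Cext; simpl; ring. Qed.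

Lemma vsub_norm_sym x y : nrm (vsub x y) = nrm (vsub y x).
Proof.
  unfold vsub. rewrite <- vnorm_opp, vopp_add, vopp_opp, cb_add_comm. reflexivity.
Qed.

Lemma vsub_split x y z : vsub x z = vsub x y +v vsub y z.
Proof.
  unfold vsub. rewrite <- cb_add_assoc. f_equal. rewrite cb_add_assoc.
  rewrite (cb_add_comm X (vop y) y), cb_add_opp, vadd_0_l. reflexivity.
Qed.

Lemma vsub_tri x y z : nrm (vsub x z) <= nrm (vsub x y) + nrm (vsub y z).
Proof. rewrite (vsub_split x y z). apply cb_norm_triangle. Qed.

Lemma vsub_add x1 x2 y1 y2 : vsub (x1 +v x2) (y1 +v y2) = vsub x1 y1 +v vsub x2 y2.
Proof.
  unfold vsub. rewrite vopp_add. rewrite <- !cb_add_assoc. f_equal.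
  rewrite !cb_add_assoc. f_equal. apply cb_add_comm.
Qed.

Lemma vsub_scal a x y : vsub (sc a x) (sc a y) = sc a (vsub x y).
Proof. unfold vsub. rewrite cb_scal_addv. f_equal. rewrite !vopp_scal, !cb_scal_assoc. f_equal. apply Cext; simpl; ring. Qed.

Lemma vsub_self x : vsub x x = vz.
Proof. apply cb_add_opp. Qed.

Lemma vsub_zero x : vsub x vz = x.
Proof. unfold vsub. rewrite vopp_scal, vscal_zero. apply cb_add_zero. Qed.

Lemma vnorm_sub_le x y : nrm x <= nrm (vsub x y) + nrm y.
Proof. pose proof (vsub_tri x y vz). rewrite !vsub_zero in H. exact H. Qed.

Fixpoint vsum (f : nat -> X) (n : nat) : X :=
  match n with O => f O | S p => vsum f p +v f (S p) end.

Lemma vsum_S f n : vsum f (S n) = vsum f n +v f (S n).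
Proof. reflexivity. Qed.

Lemma vsum_ext f g n : (forall i, (i <= n)%nat -> f i = g i) -> vsum f n = vsum g n.
Proof. induction n; intros H; simpl. apply H; lia. rewrite IHn by (intros; apply H; lia). rewrite H by lia. reflexivity. Qed.

Lemma vsum_add f g n : vsum (fun i => f i +v g i) n = vsum f n +v vsum g n.
Proof.
  induction n; simpl. reflexivity. rewrite IHn. rewrite <- !cb_add_assoc. f_equal.
  rewrite !cb_add_assoc. f_equal. apply cb_add_comm.
Qed.

Lemma vsum_scal a f n : sc a (vsum f n) = vsum (fun i => sc a (f i)) n.
Proof. induction n; simpl. reflexivity. rewrite cb_scal_addv, IHn. reflexivity. Qed.

Lemma vsum_coef (c : nat -> Cplx) v n : vsum (fun i => sc (c i) v) n = sc (Csum c n) v.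
Proof. induction n; simpl. reflexivity. rewrite IHn, cb_scal_adds. reflexivity. Qed.

Lemma vsum_norm f n : nrm (vsum f n) <= sum_f_R0 (fun i => nrm (f i)) n.
Proof. induction n; simpl. lra. pose proof (cb_norm_triangle X (vsum f n) (f (S n))). lra. Qed.

Lemma vsum_zero_after f M n : (M <= n)%nat -> (forall i, (M < i)%nat -> f i = vz) -> vsum f n = vsum f M.
Proof. intros Hn H; induction Hn. reflexivity. simpl. rewrite IHHn, H by lia. apply cb_add_zero. Qed.

Lemma vsum_all_zero f n : (forall i, (i <= n)%nat -> f i = vz) -> vsum f n = vz.
Proof. induction n; intros H; simpl. apply H; lia. rewrite IHn, H by (intros; try apply H; lia). apply cb_add_zero. Qed.

Lemma vsum_tri (f : nat -> nat -> X) n :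
  vsum (fun m => vsum (fun j => f m j) m) n =
  vsum (fun j => vsum (fun l => f (j + l)%nat j) (n - j)) n.
Proof.
  induction n.
  - simpl. reflexivity.
  - simpl vsum at 1. rewrite IHn.
    rewrite (vsum_ext (fun j => vsum (fun l => f (j + l)%nat j) (S n - j))
                       (fun j => if (j <=? n)%nat then vsum (fun l => f (j + l)%nat j) (n - j) +v f (S n) j
                                 else f (S n) (S n)) (S n)).
    2: { intros i Hi. destruct (Nat.leb_spec i n).
         - replace (S n - i)%nat with (S (n - i)) by lia. simpl. f_equal. f_equal; lia.
         - replace i with (S n) by lia. replace (S n - S n)%nat with O by lia. simpl. f_equal; lia. }
    rewrite vsum_S. cbv beta. replace (S n <=? n)%nat with false by (symmetry; apply Nat.leb_gt; lia).
    rewrite (vsum_ext (fun j => if (j <=? n)%nat then vsum (fun l => f (j + l)%nat j) (n - j) +v f (S n) j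
                                 else f (S n) (S n))
                       (fun j => vsum (fun l => f (j + l)%nat j) (n - j) +v f (S n) j) n).
    2: { intros i Hi. destruct (Nat.leb_spec i n). reflexivity. lia. }
    rewrite vsum_add. rewrite <- !cb_add_assoc. reflexivity.
Qed.

Definition vconv (u : nat -> X) (l : X) : Prop :=
  forall eps, eps > 0 -> exists N, forall n, (n >= N)%nat -> nrm (vsub (u n) l) < eps.

Lemma vconv_unique u l1 l2 : vconv u l1 -> vconv u l2 -> l1 = l2.
Proof.
  intros H1 H2. assert (nrm (vsub l1 l2) = 0).
  { destruct (Rle_lt_or_eq_dec 0 _ (cb_norm_nonneg X (vsub l1 l2))) as [E|E]; auto. exfalso.
    set (e := nrm (vsub l1 l2)) in *.
    destruct (H1 (e/2) ltac:(lra)) as [N1 HN1]. destruct (H2 (e/2) ltac:(lra)) as [N2 HN2].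
    specialize (HN1 (N1 + N2)%nat ltac:(lia)). specialize (HN2 (N1 + N2)%nat ltac:(lia)).
    pose proof (vsub_tri l1 (u (N1 + N2)%nat) l2). rewrite (vsub_norm_sym l1 (u _)) in H. fold e in H. lra. }
  apply cb_norm_eq0 in H. apply (vadd_cancel_l (vop l2)).
  rewrite (cb_add_comm X (vop l2) l2), cb_add_opp. rewrite cb_add_comm. exact H.
Qed.

Lemma vconv_add u v l1 l2 : vconv u l1 -> vconv v l2 -> vconv (fun n => u n +v v n) (l1 +v l2).
Proof.
  intros H1 H2 e He. destruct (H1 (e/2) ltac:(lra)) as [N1 HN1]. destruct (H2 (e/2) ltac:(lra)) as [N2 HN2].
  exists (N1 + N2)%nat. intros n Hn. rewrite vsub_add.
  pose proof (cb_norm_triangle X (vsub (u n) l1) (vsub (v n) l2)).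
  specialize (HN1 n ltac:(lia)). specialize (HN2 n ltac:(lia)). lra.
Qed.

Lemma vconv_scal a u l : vconv u l -> vconv (fun n => sc a (u n)) (sc a l).
Proof.
  intros H e He. destruct (H (e / (Cmod a + 1))) as [N HN].
  { apply Rdiv_lt_0_compat. lra. pose proof (Cmod_ge0 a). lra. }
  exists N. intros n Hn. rewrite vsub_scal, cb_norm_scal. specialize (HN n Hn).
  pose proof (Cmod_ge0 a). pose proof (cb_norm_nonneg X (vsub (u n) l)).
  apply (Rmult_lt_compat_l (Cmod a + 1)) in HN; [|lra].
  replace ((Cmod a + 1) * (e / (Cmod a + 1))) with e in HN by (field; lra). nra.
Qed.

Lemma vconv_norm_le u l x M : vconv u l -> (forall n, nrm (vsub (u n) x) <= M) -> nrm (vsub l x) <= M.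
Proof.
  intros H HM. destruct (Rle_or_lt (nrm (vsub l x)) M) as [h|h]; auto. exfalso.
  destruct (H (nrm (vsub l x) - M) ltac:(lra)) as [N HN]. specialize (HN N (le_n _)).
  pose proof (vsub_tri l (u N) x). rewrite (vsub_norm_sym l (u N)) in H0. specialize (HM N). lra.
Qed.

End Vec.


Section Ops.
Context {X : CBanach}.
Local Notation "x +v y" := (cb_add X x y) (at level 50, left associativity).
Local Notation vz := (cb_zero X).
Local Notation nrm := (cb_norm X).
Local Notation sc := (cb_scal X).

Lemma vadd_swap (a b c d : X) : (a +v b) +v (c +v d) = (a +v c) +v (b +v d).
Proof. rewrite <- !cb_add_assoc. f_equal. rewrite !cb_add_assoc. f_equal. apply cb_add_comm. Qed.

Lemma lin_zero (U : X -> X) : (forall x y, U (x +v y) = U x +v U y) -> U vz = vz.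
Proof.
  intros H. apply (vadd_cancel_l (U vz)). rewrite <- H, !cb_add_zero. reflexivity.
Qed.

Lemma opnorm_le (U : X -> X) M : 0 <= M -> (forall x, nrm (U x) <= M * nrm x) -> opnorm U <= M.
Proof.
  intros HM H. unfold opnorm. destruct excluded_middle_informative as [h|h]; [|lra].
  destruct constructive_indefinite_description as [l [Hl1 Hl2]]. simpl.
  apply Hl2. intros r [x [Hx ->]]. specialize (H x). pose proof (cb_norm_nonneg X x). nra.
Qed.

Lemma opnorm_ge (U : X -> X) : is_bounded_op U -> forall x, nrm (U x) <= opnorm U * nrm x.
Proof.
  intros [Hadd [Hsc [M HM]]].
  set (E := fun r => exists x : X, nrm x <= 1 /\ r = nrm (U x)).
  assert (Hex : exists l, is_lub E l).
  { destruct (completeness E) as [l Hl].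
    - exists (Rabs M). intros r [x [Hx ->]]. specialize (HM x). pose proof (cb_norm_nonneg X x).
      pose proof (Rle_abs M). pose proof (Rabs_pos M). nra.
    - exists (nrm (U vz)). exists vz. rewrite vnorm_zero. split; [lra|reflexivity].
    - exists l; auto. }
  assert (Hlub : forall l, is_lub E l -> forall x, nrm (U x) <= l * nrm x).
  { intros l [Hl1 Hl2] x.
    destruct (Rle_lt_or_eq_dec 0 _ (cb_norm_nonneg X x)) as [Hp|Hp].
    - set (y := sc (RtoC (/ nrm x)) x).
      assert (Hy : nrm y = 1).
      { unfold y. rewrite vnorm_scalR. rewrite Rabs_right. field; lra.
        apply Rle_ge; left; apply Rinv_0_lt_compat; lra. }
      assert (E (nrm (U y))) by (exists y; split; [lra|reflexivity]).
      apply Hl1 in H. unfold y in H. rewrite Hsc, vnorm_scalR in H.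
      rewrite Rabs_right in H by (apply Rle_ge; left; apply Rinv_0_lt_compat; lra).
      apply (Rmult_le_compat_l (nrm x)) in H; [|lra].
      rewrite <- Rmult_assoc, Rinv_r, Rmult_1_l in H by lra. lra.
    - symmetry in Hp. apply cb_norm_eq0 in Hp. subst x.
      rewrite (lin_zero U Hadd), vnorm_zero. lra. }
  intros x. unfold opnorm. destruct excluded_middle_informative as [h|h].
  - destruct constructive_indefinite_description as [l Hl]. simpl. apply Hlub; auto.
  - exfalso. apply h. exact Hex.
Qed.

Lemma opnorm_nonneg_bop (U : X -> X) : is_bounded_op U -> 0 <= opnorm U.
Proof.
  intros H. unfold opnorm. destruct excluded_middle_informative as [h|h]; [|lra].
  destruct constructive_indefinite_description as [l [Hl1 Hl2]]. simpl.
  apply Hl1. exists vz. rewrite vnorm_zero. split. lra. destruct H as [Ha _].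
  rewrite (lin_zero U Ha), vnorm_zero. reflexivity.
Qed.

Lemma bop_id : is_bounded_op (fun x : X => x).
Proof. split; [|split]; auto. exists 1. intros; lra. Qed.

Lemma bop_comp (U V : X -> X) : is_bounded_op U -> is_bounded_op V -> is_bounded_op (fun x => U (V x)).
Proof.
  intros [Ua [Us [MU HU]]] [Va [Vs [MV HV]]]. split; [|split].
  - intros; rewrite Va, Ua; reflexivity.
  - intros; rewrite Vs, Us; reflexivity.
  - exists (Rabs MU * Rabs MV). intros x. eapply Rle_trans. apply HU.
    pose proof (HV x). pose proof (cb_norm_nonneg X x). pose proof (cb_norm_nonneg X (V x)).
    pose proof (Rle_abs MU). pose proof (Rle_abs MV). pose proof (Rabs_pos MU). pose proof (Rabs_pos MV).
    assert (MU * nrm (V x) <= Rabs MU * nrm (V x)) by nra.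
    assert (Rabs MU * nrm (V x) <= Rabs MU * (MV * nrm x)) by nra.
    assert (Rabs MU * (MV * nrm x) <= Rabs MU * Rabs MV * nrm x).
    { rewrite Rmult_assoc. apply Rmult_le_compat_l; auto. nra. }
    lra.
Qed.

Lemma bop_add (U V : X -> X) : is_bounded_op U -> is_bounded_op V -> is_bounded_op (fun x => U x +v V x).
Proof.
  intros [Ua [Us [MU HU]]] [Va [Vs [MV HV]]]. split; [|split].
  - intros; rewrite Va, Ua. apply vadd_swap.
  - intros; rewrite Vs, Us, cb_scal_addv; reflexivity.
  - exists (Rabs MU + Rabs MV). intros x. eapply Rle_trans. apply cb_norm_triangle.
    pose proof (HU x). pose proof (HV x). pose proof (cb_norm_nonneg X x).
    pose proof (Rle_abs MU). pose proof (Rle_abs MV). nra.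
Qed.

Lemma bop_scal a (U : X -> X) : is_bounded_op U -> is_bounded_op (opscal a U).
Proof.
  intros [Ua [Us [MU HU]]]. unfold opscal. split; [|split].
  - intros; rewrite Ua, cb_scal_addv; reflexivity.
  - intros; rewrite Us, !cb_scal_assoc. f_equal. apply Cext; simpl; ring.
  - exists (Cmod a * Rabs MU). intros x. rewrite cb_norm_scal.
    pose proof (HU x). pose proof (cb_norm_nonneg X x). pose proof (Cmod_ge0 a).
    pose proof (Rle_abs MU). assert (nrm (U x) <= Rabs MU * nrm x) by nra. nra.
Qed.

Lemma bop_pow (T : X -> X) j : is_bounded_op T -> is_bounded_op (oppow T j).
Proof.
  intros H. induction j.
  - apply bop_id.
  - change (oppow T (S j)) with (fun x => T (oppow T j x)). apply bop_comp; auto.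
Qed.

Lemma bop_sum (F : nat -> X -> X) n : (forall i, is_bounded_op (F i)) -> is_bounded_op (opsum F n).
Proof.
  intros H. induction n. apply H. simpl. apply bop_add; auto.
Qed.

Lemma opsum_pt (F : nat -> X -> X) n x : opsum F n x = vsum (fun i => F i x) n.
Proof. induction n; simpl. reflexivity. rewrite IHn. reflexivity. Qed.

Lemma bop_sub (U V : X -> X) : is_bounded_op U -> is_bounded_op V -> is_bounded_op (opsub U V).
Proof.
  intros HU HV. unfold opsub, vsub.
  apply bop_add; auto. destruct HV as [Va [Vs [M HM]]]. split; [|split].
  - intros; rewrite Va, vopp_add; reflexivity.
  - intros; rewrite Vs, !vopp_scal, !cb_scal_assoc. f_equal. apply Cext; simpl; ring.
  - exists M. intros; rewrite vnorm_opp; auto.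
Qed.

End Ops.

Definition Wser (g0 : R) (f : nat -> Cplx) : nat -> Cplx :=
  fun n => Cseries (fun i => Cmul (RtoC (kC g0 i)) (f (n + i)%nat)).

Definition absS (g : nat -> Cplx) (M : R) := forall N, sum_f_R0 (fun i => Cmod (g i)) N <= M.

Lemma absS_shift g M n : absS g M -> forall N, sum_f_R0 (fun i => Cmod (g (n + i)%nat)) N <= M.
Proof.
  intros H N. eapply Rle_trans; [|apply (H (N + n)%nat)].
  replace (sum_f_R0 (fun i => Cmod (g (n + i)%nat)) N) with (sum_f_R0 (fun i => Cmod (g (i + n)%nat)) N).
  apply (sum_shift_le (fun i => Cmod (g i))). intros; apply Cmod_ge0.
  apply sum_eq; intros; f_equal; f_equal; lia.
Qed.

Lemma Wser_conv g0 g M n : g0 <= 1 -> absS g M ->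
  Cconv (Csum (fun i => Cmul (RtoC (kC g0 i)) (g (n + i)%nat))) (Wser g0 g n).
Proof.
  intros Hg HM. destruct (kC_bounded g0 Hg) as [C HC].
  assert (HC0 : 0 <= C) by (specialize (HC O); pose proof (Rabs_pos (kC g0 0)); lra).
  destruct (Cseries_abs_cv (fun i => Cmul (RtoC (kC g0 i)) (g (n + i)%nat)) (C * M)) as [l Hl].
  { intros N. eapply Rle_trans with (sum_f_R0 (fun i => C * Cmod (g (n + i)%nat)) N).
    apply sum_Rle. intros i _. rewrite Cmod_mul, Cmod_RtoC. apply Rmult_le_compat_r. apply Cmod_ge0. auto.
    replace (sum_f_R0 (fun i => C * Cmod (g (n + i)%nat)) N) with (C * sum_f_R0 (fun i => Cmod (g (n + i)%nat)) N)
      by (rewrite scal_sum; apply sum_eq; intros; ring).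
    apply Rmult_le_compat_l; auto. apply absS_shift; auto. }
  unfold Wser. rewrite (Cseries_eq _ l Hl). exact Hl.
Qed.

Lemma Wp_step g0 g M n : g0 <= 1 -> absS g M ->
  Csub (Wser g0 g n) (Wser g0 g (S n)) = Wser (g0 - 1) g n.
Proof.
  intros Hg HM.
  set (U := Csum (fun i => Cmul (RtoC (kC g0 i)) (g (n + i)%nat))).
  set (V := Csum (fun i => Cmul (RtoC (kC g0 i)) (g (S n + i)%nat))).
  set (Z := Csum (fun i => Cmul (RtoC (kC (g0 - 1) i)) (g (n + i)%nat))).
  assert (Hid : forall N, U (S N) = Cadd (Z (S N)) (V N)).
  { induction N.
    - unfold U, V, Z; cbn [Csum]. rewrite (kpascal g0 0). rewrite !kC_O.
      replace (n + 1)%nat with (S n + 0)%nat by lia. replace (n + 0)%nat with n by lia.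
      apply Cext; simpl; ring.
    - unfold U, V, Z in *. change (Csum ?f (S (S N))) with (Cadd (Csum f (S N)) (f (S (S N)))).
      rewrite IHN. change (Csum ?f (S N)) with (Cadd (Csum f N) (f (S N))) at 3.
      rewrite (kpascal g0 (S N)).
      replace (n + S (S N))%nat with (S n + S N)%nat by lia.
      apply Cext; simpl; ring. }
  symmetry. unfold Wser at 1. apply Cseries_eq. fold Z.
  apply Cconv_S.
  apply Cconv_ext with (fun N => Csub (U (S N)) (V N)).
  { intros N. rewrite Hid. apply Cext; simpl; ring. }
  apply Cconv_sub. apply Cconv_of_S. apply (Wser_conv g0 g M n); auto.
  apply (Wser_conv g0 g M (S n)); auto.
Qed.

Lemma Wser_iter b g M j n : b <= 1 -> absS g M ->
  Nat.iter j Wp (Wser b g) n = Wser (b - INR j) g n.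
Proof.
  intros Hb HM. revert n. induction j; intros n.
  - simpl. replace (b - 0) with b by ring. reflexivity.
  - change (Nat.iter (S j) Wp (Wser b g) n) with (Wp (Nat.iter j Wp (Wser b g)) n).
    unfold Wp. rewrite !IHj. rewrite Wp_step with (M := M); auto.
    rewrite S_INR. replace (b - (INR j + 1)) with (b - INR j - 1) by ring. reflexivity.
    pose proof (pos_INR j). lra.
Qed.

Lemma mfrac_le A : 0 < A -> INR (mfrac A) <= A + 1 /\ A <= INR (mfrac A).
Proof.
  intros HA. unfold mfrac. destruct (archimed A) as [H1 H2].
  assert (Hz : (0 <= up A)%Z). { apply le_IZR. lra. }
  rewrite INR_IZR_INZ, Z2Nat.id by auto. lra.
Qed.

Lemma Walpha_eq A a M n : 0 < A -> absS a M -> Walpha A a n = Wser (- A) a n.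
Proof.
  intros HA HM. unfold Walpha. change (Wneg (INR (mfrac A) - A) a) with (Wser (INR (mfrac A) - A) a).
  rewrite Wser_iter with (M := M); auto.
  replace (INR (mfrac A) - A - INR (mfrac A)) with (- A) by ring. reflexivity.
  pose proof (mfrac_le A HA). lra.
Qed.

Lemma Un_cv_le u l b : Un_cv u l -> (forall n, u n <= b) -> l <= b.
Proof.
  intros H Hb. destruct (Rle_or_lt l b) as [h|h]; auto. exfalso.
  destruct (H (l - b) ltac:(lra)) as [N HN]. specialize (HN N (le_n _)). specialize (Hb N).
  unfold Rdist in HN. pose proof (Rle_abs (u N - l)). pose proof (Rabs_maj2 (u N - l)). lra.
Qed.

Lemma Un_cv_fsum (y : nat -> nat -> R) (x : nat -> R) N :
  (forall n, (n <= N)%nat -> Un_cv (fun J => y J n) (x n)) ->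
  Un_cv (fun J => sum_f_R0 (fun n => y J n) N) (sum_f_R0 x N).
Proof.
  induction N; intros H.
  - simpl. apply H; lia.
  - simpl. apply CV_plus. apply IHN; intros; apply H; lia. apply H; lia.
Qed.

Lemma Un_cv_cmul (u : nat -> R) l c : Un_cv u l -> Un_cv (fun n => c * u n) (c * l).
Proof.
  intros H. apply CV_mult; auto. intros e He. exists O. intros; unfold Rdist.
  replace (c - c) with 0 by ring. rewrite Rabs_R0. lra.
Qed.

Lemma sum_scal_l c (f : nat -> R) N : sum_f_R0 (fun i => c * f i) N = c * sum_f_R0 f N.
Proof. rewrite scal_sum. apply sum_eq; intros; ring. Qed.

Section Est.
Variable A : R.
Hypothesis HA : 0 < A.

Lemma W_est g Mg S B : absS g Mg ->
  (forall n, sum_f_R0 (fun i => Rabs (kC (- A) i)) n <= B) ->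
  (forall N, sum_f_R0 (fun m => kC (A + 1) m * Cmod (g m)) N <= S) ->
  forall N, sum_f_R0 (fun n => kC (A + 1) n * Cmod (Wser (- A) g n)) N <= B * S.
Proof.
  intros Hg HB HS N.
  assert (HS0 : 0 <= S).
  { eapply Rle_trans; [|apply (HS O)]. simpl. pose proof (Cmod_ge0 (g O)). lra. }
  set (Q := fun J n => Cmod (Csum (fun i => Cmul (RtoC (kC (- A) i)) (g (n + i)%nat)) J)).
  apply (Un_cv_le (fun J => sum_f_R0 (fun n => kC (A + 1) n * Q J n) N)).
  { apply Un_cv_fsum. intros n _. apply Un_cv_cmul. unfold Q. apply Cconv_mod.
    apply (Wser_conv (- A) g Mg n); auto. lra. }
  intros J.
  apply Rle_trans with (sum_f_R0 (fun n => sum_f_R0 (fun i => Rabs (kC (- A) i) *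
                           (kC (A + 1) (n + i) * Cmod (g (n + i)%nat))) J) N).
  { apply sum_Rle. intros n _. unfold Q.
    eapply Rle_trans. apply Rmult_le_compat_l. left; apply kp_pos; auto. apply Csum_mod.
    rewrite scal_sum. apply sum_Rle. intros i _. rewrite Cmod_mul, Cmod_RtoC.
    pose proof (kp_mono A HA n (n + i) ltac:(lia)). pose proof (Rabs_pos (kC (- A) i)).
    pose proof (Cmod_ge0 (g (n + i)%nat)). pose proof (kp_pos A HA n).
    assert (Rabs (kC (- A) i) * Cmod (g (n + i)%nat) * kC (A + 1) n <=
            Rabs (kC (- A) i) * Cmod (g (n + i)%nat) * kC (A + 1) (n + i)).
    { apply Rmult_le_compat_l; auto. apply Rmult_le_pos; auto. }
    lra. }
  rewrite sum_rect.
  apply Rle_trans with (sum_f_R0 (fun i => Rabs (kC (- A) i) * S) J).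
  { apply sum_Rle. intros i _. rewrite sum_scal_l.
    apply Rmult_le_compat_l. apply Rabs_pos.
    eapply Rle_trans. apply (sum_shift_le (fun m => kC (A + 1) m * Cmod (g m)) N i).
    intros; apply Rmult_le_pos. left; apply kp_pos; auto. apply Cmod_ge0. apply HS. }
  replace (sum_f_R0 (fun i => Rabs (kC (- A) i) * S) J) with (S * sum_f_R0 (fun i => Rabs (kC (- A) i)) J)
    by (rewrite scal_sum; reflexivity).
  rewrite Rmult_comm. apply Rmult_le_compat_r; auto.
Qed.

End Est.

Lemma Csum_RtoC (f : nat -> R) n : Csum (fun i => RtoC (f i)) n = RtoC (sum_f_R0 f n).
Proof. induction n; simpl. reflexivity. rewrite IHn. apply Cext; simpl; ring. Qed.

Lemma RtoC_1 : RtoC 1 = Defs.C1.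
Proof. reflexivity. Qed.

Section Conv.
Context {X : CBanach}.
Local Notation "x +v y" := (cb_add X x y) (at level 50, left associativity).
Local Notation vz := (cb_zero X).
Local Notation nrm := (cb_norm X).
Local Notation sc := (cb_scal X).
Variable A : R.

Definition Dv (v : nat -> X) (m : nat) : X :=
  vsum (fun j => sc (RtoC (kC A (m - j))) (v j)) m.

Lemma core_id (v : nat -> X) n :
  vsum (fun m => sc (RtoC (kC (- A) (n - m))) (Dv v m)) n = v n.
Proof.
  unfold Dv.
  rewrite (vsum_ext _ (fun m => vsum (fun j => sc (RtoC (kC (- A) (n - m) * kC A (m - j))) (v j)) m) n).
  2: { intros m _. rewrite vsum_scal. apply vsum_ext. intros j _. rewrite cb_scal_assoc. f_equal.
       apply Cext; simpl; ring. }
  rewrite (vsum_tri (fun m j => sc (RtoC (kC (- A) (n - m) * kC A (m - j))) (v j)) n).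
  rewrite (vsum_ext _ (fun j => sc (RtoC (kC 0 (n - j))) (v j)) n).
  2: { intros j Hj. rewrite vsum_coef. f_equal. rewrite Csum_RtoC. f_equal.
       replace (kC 0 (n - j)) with (kC (A + - A) (n - j)) by (f_equal; ring).
       rewrite <- (vandermonde A (- A) (n - j)).
       apply sum_eq. intros i Hi. replace (n - (j + i))%nat with (n - j - i)%nat by lia.
       replace (j + i - j)%nat with i by lia. ring. }
  destruct n.
  - change (vsum ?f 0) with (f O); cbv beta. rewrite Nat.sub_diag, kC_O, RtoC_1. apply cb_scal_one.
  - rewrite vsum_S. rewrite vsum_all_zero.
    + rewrite Nat.sub_diag, kC_O, RtoC_1, cb_scal_one. apply vadd_0_l.
    + intros i Hi. replace (S n - i)%nat with (S (n - i)) by lia. rewrite kC0_S.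
      change (RtoC 0) with C0. apply vscal_C0.
Qed.

Lemma phi_id (a : nat -> Cplx) (v : nat -> X) M :
  vsum (fun m => sc (Csum (fun l => Cmul (RtoC (kC (- A) l)) (a (m + l)%nat)) (M - m)) (Dv v m)) M =
  vsum (fun j => sc (a j) (v j)) M.
Proof.
  induction M.
  - unfold Dv. cbn [vsum Csum Nat.sub Nat.add]. rewrite kC_O, RtoC_1, cb_scal_one. 
    f_equal. apply Cext; simpl; ring.
  - rewrite (vsum_S (fun j => sc (a j) (v j))). rewrite <- IHM.
    rewrite <- (core_id v (S M)). rewrite vsum_scal.
    rewrite (vsum_ext _ (fun m => (if (m <=? M)%nat then
           sc (Csum (fun l => Cmul (RtoC (kC (- A) l)) (a (m + l)%nat)) (M - m)) (Dv v m) else vz)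
           +v sc (a (S M)) (sc (RtoC (kC (- A) (S M - m))) (Dv v m))) (S M)).
    + rewrite vsum_add. rewrite (vsum_S _ M). replace (S M <=? M)%nat with false by (symmetry; apply Nat.leb_gt; lia).
      rewrite cb_add_zero. f_equal. apply vsum_ext. intros i Hi.
      replace (i <=? M)%nat with true by (symmetry; apply Nat.leb_le; lia). reflexivity.
    + intros m Hm. destruct (Nat.leb_spec m M).
      * replace (S M - m)%nat with (S (M - m)) by lia. simpl Csum. rewrite cb_scal_adds. f_equal.
        rewrite cb_scal_assoc. f_equal. replace (m + S (M - m))%nat with (S M) by lia. apply Cext; simpl; ring.
      * replace m with (S M) by lia. rewrite Nat.sub_diag. simpl Csum. rewrite vadd_0_l.
        rewrite cb_scal_assoc. f_equal. rewrite Nat.add_0_r. apply Cext; simpl; ring.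
Qed.

End Conv.

Section Main.
Context {X : CBanach}.
Local Notation "x +v y" := (cb_add X x y) (at level 50, left associativity).
Local Notation vz := (cb_zero X).
Local Notation nrm := (cb_norm X).
Local Notation sc := (cb_scal X).
Variable A : R.
Variable T : X -> X.
Hypothesis HA : 0 < A.
Hypothesis HT : is_bounded_op T.
Variable K : R.
Hypothesis HK : forall n, opnorm (MT A T n) <= K.

Lemma D_eq m x : DeltaT A T m x = Dv A (fun j => oppow T j x) m.
Proof. unfold DeltaT. rewrite opsum_pt. reflexivity. Qed.

Lemma bop_D n : is_bounded_op (DeltaT A T n).
Proof. unfold DeltaT. apply bop_sum. intros i. apply bop_scal, bop_pow, HT. Qed.

Lemma bop_MT n : is_bounded_op (MT A T n).
Proof. unfold MT. apply bop_scal, bop_D. Qed.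

Lemma K_nonneg : 0 <= K.
Proof. pose proof (opnorm_nonneg_bop _ (bop_MT O)). pose proof (HK O). lra. Qed.

Lemma D_bound n x : nrm (DeltaT A T n x) <= K * kC (A + 1) n * nrm x.
Proof.
  pose proof (opnorm_ge _ (bop_MT n) x). pose proof (HK n). pose proof (cb_norm_nonneg X x).
  change (MT A T n x) with (sc (RtoC (/ kC (A + 1) n)) (DeltaT A T n x)) in H. rewrite vnorm_scalR in H. pose proof (kp_pos A HA n).
  rewrite Rabs_right in H by (apply Rle_ge; left; apply Rinv_0_lt_compat; lra).
  assert (Hq : / kC (A + 1) n * nrm (DeltaT A T n x) <= K * nrm x) by nra.
  apply (Rmult_le_compat_l (kC (A + 1) n)) in Hq; [|lra].
  rewrite <- Rmult_assoc, Rinv_r, Rmult_1_l in Hq by lra. lra.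
Qed.

Variable B : R.
Hypothesis HB0 : 0 <= B.
Hypothesis HB : forall n, sum_f_R0 (fun i => Rabs (kC (- A) i)) n <= B.

Lemma T_bound n x : nrm (oppow T n x) <= K * B * kC (A + 1) n * nrm x.
Proof.
  rewrite <- (core_id A (fun j => oppow T j x) n).
  eapply Rle_trans. apply vsum_norm.
  pose proof K_nonneg. pose proof (cb_norm_nonneg X x). pose proof (kp_pos A HA n).
  apply Rle_trans with (sum_f_R0 (fun m => Rabs (kC (- A) (n - m)) * (K * kC (A + 1) n * nrm x)) n).
  { apply sum_Rle. intros m Hm. rewrite vnorm_scalR. apply Rmult_le_compat_l. apply Rabs_pos.
    rewrite <- D_eq. eapply Rle_trans. apply D_bound.
    pose proof (kp_mono A HA m n Hm).
    apply Rmult_le_compat_r; auto. apply Rmult_le_compat_l; auto. }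
  rewrite <- scal_sum. rewrite (sum_rev (fun i => Rabs (kC (- A) i)) n).
  specialize (HB n). assert (0 <= K * kC (A + 1) n * nrm x) by (apply Rmult_le_pos; [|auto]; apply Rmult_le_pos; lra).
  replace (K * B * kC (A + 1) n * nrm x) with (K * kC (A + 1) n * nrm x * B) by ring.
  apply Rmult_le_compat_l; auto.
Qed.

End Main.

Lemma sum_zero_after (f : nat -> R) M n : (M <= n)%nat -> (forall i, (M < i)%nat -> f i = 0) ->
  sum_f_R0 f n = sum_f_R0 f M.
Proof. intros Hn H; induction Hn. reflexivity. simpl. rewrite IHHn, H by lia. ring. Qed.

Lemma sum_skip (w : nat -> R) L : (forall i, 0 <= w i) -> (forall N, sum_f_R0 w N <= L) ->
  forall M N, sum_f_R0 (fun m => if (m <=? M)%nat then 0 else w m) N <= L - sum_f_R0 w M.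
Proof.
  intros Hw HL M N.
  assert (Hs : forall i, 0 <= (if (i <=? M)%nat then 0 else w i)) by (intros i; destruct (i <=? M)%nat; auto; lra).
  eapply Rle_trans. apply (sum_mono_n _ N (N + M) Hs). lia.
  assert (E : sum_f_R0 w (N + M) = sum_f_R0 (fun m => if (m <=? M)%nat then 0 else w m) (N + M) +
                                  sum_f_R0 (fun m => if (m <=? M)%nat then w m else 0) (N + M)).
  { rewrite <- plus_sum. apply sum_eq. intros i _. destruct (i <=? M)%nat; ring. }
  assert (E2 : sum_f_R0 (fun m => if (m <=? M)%nat then w m else 0) (N + M) = sum_f_R0 w M).
  { rewrite (sum_zero_after _ M). apply sum_eq. intros i Hi. replace (i <=? M)%nat with true; auto.
    symmetry; apply Nat.leb_le; lia. lia. intros i Hi. replace (i <=? M)%nat with false; auto.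
    symmetry; apply Nat.leb_gt; lia. }
  specialize (HL (N + M)%nat). lra.
Qed.

Lemma squeeze0 (w t : nat -> R) c : (forall n, 0 <= w n <= c * t n) -> Un_cv t 0 -> Un_cv w 0.
Proof.
  intros H Ht e He. destruct (Ht (e / (Rabs c + 1))) as [N HN].
  { apply Rdiv_lt_0_compat; auto. pose proof (Rabs_pos c); lra. }
  exists N. intros n Hn. specialize (HN n Hn). specialize (H n). unfold Rdist in *.
  rewrite Rminus_0_r in *. rewrite Rabs_right by lra.
  pose proof (Rabs_pos c). pose proof (Rle_abs c). pose proof (Rle_abs (t n)).
  assert (c * t n <= Rabs c * Rabs (t n)).
  { rewrite <- Rabs_mult. apply Rle_abs. }
  assert (Rabs c * Rabs (t n) <= Rabs c * (e / (Rabs c + 1))) by (apply Rmult_le_compat_l; lra).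
  assert (Rabs c * (e / (Rabs c + 1)) < e).
  { replace (Rabs c * (e / (Rabs c + 1))) with (e - e / (Rabs c + 1)) by (field; lra).
    pose proof (Rdiv_lt_0_compat e (Rabs c + 1) He ltac:(lra)). lra. }
  lra.
Qed.

Definition trc (M : nat) (a : nat -> Cplx) j := if (j <=? M)%nat then a j else C0.
Definition tlc (M : nat) (a : nat -> Cplx) j := if (j <=? M)%nat then C0 else a j.

Section Part2.
Variable A : R.
Hypothesis HA : 0 < A.
Variable a : nat -> Cplx.
Variable L : R.
Hypothesis HL : Un_cv (sum_f_R0 (fun j => npow j A * Cmod (a j))) L.

Let v := fun j => npow j A * Cmod (a j).
Let E := exp A.
Definition tail M := L - sum_f_R0 (fun j => npow j A * Cmod (a j)) M.

Lemma npow_nonneg j : 0 <= npow j A.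
Proof. destruct j; simpl. lra. unfold Rpower. left; apply exp_pos. Qed.

Lemma v_nonneg j : 0 <= v j.
Proof. unfold v. apply Rmult_le_pos. apply npow_nonneg. apply Cmod_ge0. Qed.

Lemma v_le N : sum_f_R0 v N <= L.
Proof. apply sum_incr. exact HL. apply v_nonneg. Qed.

Lemma tail_nonneg M : 0 <= tail M.
Proof. unfold tail. pose proof (v_le M). unfold v in H. lra. Qed.

Lemma tail_cv : Un_cv tail 0.
Proof.
  intros e He. destruct (HL e He) as [N HN]. exists N. intros n Hn. specialize (HN n Hn).
  unfold Rdist in *. unfold tail. replace (L - sum_f_R0 (fun j => npow j A * Cmod (a j)) n - 0)
    with (- (sum_f_R0 (fun j => npow j A * Cmod (a j)) n - L)) by ring. rewrite Rabs_Ropp. auto.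
Qed.

Lemma kp_le_Ev j : (1 <= j)%nat -> kC (A + 1) j * Cmod (a j) <= E * v j.
Proof.
  intros Hj. destruct j. lia. unfold v, E. pose proof (kp_exp A HA j). pose proof (Cmod_ge0 (a (S j))).
  rewrite <- Rmult_assoc. apply Rmult_le_compat_r; auto.
Qed.

Lemma E_pos : 0 < E.
Proof. apply exp_pos. Qed.

Lemma Cmod_tlc M j : Cmod (tlc M a j) <= Cmod (a j).
Proof. unfold tlc. destruct (j <=? M)%nat. rewrite Cmod_C0. apply Cmod_ge0. lra. Qed.

Lemma Cmod_trc M j : Cmod (trc M a j) <= Cmod (a j).
Proof. unfold trc. destruct (j <=? M)%nat. lra. rewrite Cmod_C0. apply Cmod_ge0. Qed.

Lemma sum_tl_bound M N : sum_f_R0 (fun m => kC (A + 1) m * Cmod (tlc M a m)) N <= E * tail M.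
Proof.
  apply Rle_trans with (sum_f_R0 (fun m => E * (if (m <=? M)%nat then 0 else v m)) N).
  { apply sum_Rle. intros m _. unfold tlc. destruct (Nat.leb_spec m M).
    - rewrite Cmod_C0. lra.
    - apply kp_le_Ev. lia. }
  rewrite sum_scal_l. apply Rmult_le_compat_l. left; apply E_pos.
  unfold tail. fold v. apply sum_skip. apply v_nonneg. apply v_le.
Qed.

Definition Sa := Cmod (a O) + E * L.

Lemma sum_a_bound N : sum_f_R0 (fun m => kC (A + 1) m * Cmod (a m)) N <= Sa.
Proof.
  apply Rle_trans with (sum_f_R0 (fun m => (if (m =? 0)%nat then Cmod (a O) else 0) + E * v m) N).
  { apply sum_Rle. intros m _. destruct m.
    - change ((0 =? 0)%nat) with true; cbv iota. rewrite kC_O.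
      pose proof (v_nonneg O). pose proof E_pos. pose proof (Cmod_ge0 (a O)). nra.
    - change ((S m =? 0)%nat) with false; cbv iota. pose proof (kp_le_Ev (S m) ltac:(lia)). lra. }
  rewrite plus_sum, sum_scal_l. unfold Sa.
  rewrite (sum_zero_after _ O N) by (lia || (intros i Hi; destruct i; [lia|reflexivity])).
  simpl. pose proof (v_le N). pose proof E_pos. nra.
Qed.

Lemma kp_ge1 m : 1 <= kC (A + 1) m.
Proof. pose proof (kp_mono A HA O m ltac:(lia)). simpl in H. lra. Qed.

Lemma absS_gen (g : nat -> Cplx) : (forall j, Cmod (g j) <= Cmod (a j)) -> absS g Sa.
Proof.
  intros Hg N. eapply Rle_trans; [|apply (sum_a_bound N)]. apply sum_Rle. intros m _.
  pose proof (kp_ge1 m). pose proof (Hg m). pose proof (Cmod_ge0 (g m)). nra.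
Qed.

Lemma absS_a : absS a Sa.
Proof. apply absS_gen. intros; lra. Qed.

End Part2.

Section Part3.
Context {X : CBanach}.
Local Notation "x +v y" := (cb_add X x y) (at level 50, left associativity).
Local Notation vz := (cb_zero X).
Local Notation nrm := (cb_norm X).
Local Notation sc := (cb_scal X).
Variable A : R.
Variable T : X -> X.
Hypothesis HA : 0 < A.
Hypothesis HT : is_bounded_op T.
Variable K : R.
Hypothesis HK : forall n, opnorm (MT A T n) <= K.
Variable B : R.
Hypothesis HB0 : 0 <= B.
Hypothesis HB : forall n, sum_f_R0 (fun i => Rabs (kC (- A) i)) n <= B.
Variable a : nat -> Cplx.
Variable L : R.
Hypothesis HL : Un_cv (sum_f_R0 (fun j => npow j A * Cmod (a j))) L.

Let C1 := K * B.
Let E := exp A.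
Let tl M := tail A a L M.

Lemma C1_nonneg : 0 <= C1.
Proof. unfold C1. apply Rmult_le_pos; auto. eapply K_nonneg; eauto. Qed.

Lemma T_bd j x : nrm (oppow T j x) <= C1 * kC (A + 1) j * nrm x.
Proof. unfold C1. eapply T_bound; eauto. Qed.

Definition Sn N x := vsum (fun j => sc (a j) (oppow T j x)) N.

Lemma vsub_addK (u w : X) : vsub (u +v w) u = w.
Proof. unfold vsub. rewrite (cb_add_comm X u w), <- cb_add_assoc, cb_add_opp. apply cb_add_zero. Qed.

Lemma a_split M j : a j = Cadd (trc M a j) (tlc M a j).
Proof. unfold trc, tlc. destruct (j <=? M)%nat; apply Cext; simpl; ring. Qed.

Lemma tl_vec_bound M N x :
  nrm (vsum (fun j => sc (tlc M a j) (oppow T j x)) N) <= C1 * E * tl M * nrm x.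
Proof.
  eapply Rle_trans. apply vsum_norm.
  apply Rle_trans with (sum_f_R0 (fun j => (C1 * nrm x) * (kC (A + 1) j * Cmod (tlc M a j))) N).
  { apply sum_Rle. intros j _. rewrite cb_norm_scal. pose proof (T_bd j x).
    pose proof (Cmod_ge0 (tlc M a j)).
    assert (Cmod (tlc M a j) * nrm (oppow T j x) <= Cmod (tlc M a j) * (C1 * kC (A + 1) j * nrm x))
      by (apply Rmult_le_compat_l; auto). lra. }
  rewrite sum_scal_l. pose proof C1_nonneg. pose proof (cb_norm_nonneg X x).
  pose proof (sum_tl_bound A HA a L HL M N). fold E in H1. fold (tl M) in H1.
  replace (C1 * E * tl M * nrm x) with ((C1 * nrm x) * (E * tl M)) by ring.
  apply Rmult_le_compat_l; auto. apply Rmult_le_pos; auto.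
Qed.

Lemma Sn_split M N x : (M <= N)%nat -> Sn N x = Sn M x +v vsum (fun j => sc (tlc M a j) (oppow T j x)) N.
Proof.
  intros HMN. unfold Sn.
  rewrite (vsum_ext _ (fun j => sc (trc M a j) (oppow T j x) +v sc (tlc M a j) (oppow T j x)) N).
  2: { intros i _. rewrite <- cb_scal_adds. rewrite <- a_split. reflexivity. }
  rewrite vsum_add. f_equal.
  rewrite (vsum_zero_after _ M N HMN).
  - apply vsum_ext. intros i Hi. unfold trc. replace (i <=? M)%nat with true; auto.
    symmetry; apply Nat.leb_le; auto.
  - intros i Hi. unfold trc. replace (i <=? M)%nat with false. apply vscal_C0.
    symmetry; apply Nat.leb_gt; auto.
Qed.

Lemma Sn_diff M N x : (M <= N)%nat -> nrm (vsub (Sn N x) (Sn M x)) <= C1 * E * tl M * nrm x.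
Proof. intros H. rewrite (Sn_split M N x H), vsub_addK. apply tl_vec_bound. Qed.

Lemma Sn_ex x : exists l, vconv (fun N => Sn N x) l.
Proof.
  apply cb_complete. intros e He.
  set (c := 2 * C1 * E * nrm x + 1).
  assert (Hc : 0 < c).
  { unfold c. pose proof C1_nonneg. pose proof (cb_norm_nonneg X x). pose proof (exp_pos A).
    fold E in H1. assert (0 <= C1 * E * nrm x) by (apply Rmult_le_pos; [apply Rmult_le_pos|]; lra). lra. }
  destruct (tail_cv A a L HL (e / c) ltac:(apply Rdiv_lt_0_compat; auto)) as [M HM].
  specialize (HM M (le_n _)). unfold Rdist in HM. rewrite Rminus_0_r in HM.
  pose proof (tail_nonneg A a L HL M). rewrite Rabs_right in HM by lra. fold (tl M) in HM, H.
  exists M. intros m n Hm Hn.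
  pose proof (vsub_tri (Sn m x) (Sn M x) (Sn n x)). rewrite (vsub_norm_sym (Sn M x) (Sn n x)) in H0.
  pose proof (Sn_diff M m x Hm). pose proof (Sn_diff M n x Hn).
  assert (Hb : 2 * (C1 * E * tl M * nrm x) < e).
  { pose proof C1_nonneg. pose proof (cb_norm_nonneg X x). pose proof (exp_pos A). fold E in H5.
    assert (2 * (C1 * E * tl M * nrm x) = tl M * (c - 1)) by (unfold c; ring).
    rewrite H6. apply Rmult_lt_compat_r with (r := c) in HM; auto.
    unfold Rdiv in HM. rewrite Rmult_assoc, Rinv_l, Rmult_1_r in HM by lra. nra. }
  change (cb_add X (Sn m x) (cb_opp X (Sn n x))) with (vsub (Sn m x) (Sn n x)). lra.
Qed.

Definition Sdef (x : X) : X := proj1_sig (constructive_indefinite_description _ (Sn_ex x)).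

Lemma S_conv x : vconv (fun N => Sn N x) (Sdef x).
Proof. unfold Sdef. destruct constructive_indefinite_description as [l Hl]. exact Hl. Qed.

Lemma vconv_norm_le_ev (u : nat -> X) l x Mb N0 : vconv u l ->
  (forall n, (N0 <= n)%nat -> nrm (vsub (u n) x) <= Mb) -> nrm (vsub l x) <= Mb.
Proof.
  intros H HM. destruct (Rle_or_lt (nrm (vsub l x)) Mb) as [h|h]; auto. exfalso.
  destruct (H (nrm (vsub l x) - Mb) ltac:(lra)) as [N HN]. specialize (HN (N + N0)%nat ltac:(lia)).
  pose proof (vsub_tri l (u (N + N0)%nat) x). rewrite (vsub_norm_sym l (u _)) in H0.
  specialize (HM (N + N0)%nat ltac:(lia)). lra.
Qed.

Lemma S_tail M x : nrm (vsub (Sn M x) (Sdef x)) <= C1 * E * tl M * nrm x.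
Proof.
  rewrite vsub_norm_sym. apply (vconv_norm_le_ev _ _ _ _ M (S_conv x)).
  intros n Hn. apply Sn_diff; auto.
Qed.

Lemma S_bop : is_bounded_op Sdef.
Proof.
  split; [|split].
  - intros x y. apply (vconv_unique (fun N => Sn N (x +v y))). apply S_conv.
    assert (E1 : forall N, Sn N (x +v y) = Sn N x +v Sn N y).
    { intros N. unfold Sn. rewrite <- vsum_add. apply vsum_ext. intros i _.
      destruct (bop_pow T i HT) as [Ha _]. rewrite Ha. apply cb_scal_addv. }
    intros e He. destruct (vconv_add _ _ _ _ (S_conv x) (S_conv y) e He) as [N HN].
    exists N. intros n Hn. rewrite E1. apply HN; auto.
  - intros c x. apply (vconv_unique (fun N => Sn N (sc c x))). apply S_conv.
    assert (E1 : forall N, Sn N (sc c x) = sc c (Sn N x)).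
    { intros N. unfold Sn. rewrite vsum_scal. apply vsum_ext. intros i _.
      destruct (bop_pow T i HT) as [_ [Hs _]]. rewrite Hs, !cb_scal_assoc. f_equal. apply Cext; simpl; ring. }
    intros e He. destruct (vconv_scal c _ _ (S_conv x) e He) as [N HN].
    exists N. intros n Hn. rewrite E1. apply HN; auto.
  - exists (C1 * E * tl O + Cmod (a O)). intros x.
    eapply Rle_trans. apply (vnorm_sub_le (Sdef x) (Sn O x)).
    rewrite vsub_norm_sym. pose proof (S_tail O x).
    replace (nrm (Sn O x)) with (Cmod (a O) * nrm x) by (unfold Sn; simpl; rewrite cb_norm_scal; reflexivity).
    rewrite Rmult_plus_distr_r. lra.
Qed.


Let Sa' := Sa A a L.
Lemma absS_a' : absS a Sa'.
Proof. apply absS_a; auto. Qed.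
Lemma absS_tr M : absS (trc M a) Sa'.
Proof. apply absS_gen; auto. intros; apply Cmod_trc. Qed.
Lemma absS_tl M : absS (tlc M a) Sa'.
Proof. apply absS_gen; auto. intros; apply Cmod_tlc. Qed.

Lemma W_split M n : Walpha A a n = Cadd (Wser (- A) (trc M a) n) (Wser (- A) (tlc M a) n).
Proof.
  rewrite (Walpha_eq A a Sa' n HA absS_a'). unfold Wser at 1. apply Cseries_eq.
  eapply Cconv_ext; [|apply Cconv_add; [apply (Wser_conv (- A) (trc M a) Sa' n) | apply (Wser_conv (- A) (tlc M a) Sa' n)]].
  - intros N. cbv beta. rewrite <- Csum_add. apply Csum_ext. intros i _. rewrite (a_split M (n + i)).
    apply Cext; simpl; ring.
  - lra.
  - apply absS_tr.
  - lra.
  - apply absS_tl.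
Qed.

Lemma Wtr_zero M n : (M < n)%nat -> Wser (- A) (trc M a) n = C0.
Proof.
  intros H. unfold Wser. apply Cseries_eq.
  assert (Hz : forall N, Csum (fun i => Cmul (RtoC (kC (- A) i)) (trc M a (n + i)%nat)) N = C0).
  { intros N. induction N.
    - simpl. unfold trc. replace (n + 0 <=? M)%nat with false by (symmetry; apply Nat.leb_gt; lia).
      apply Cext; simpl; ring.
    - simpl. rewrite IHN. unfold trc. replace (n + S N <=? M)%nat with false by (symmetry; apply Nat.leb_gt; lia).
      apply Cext; simpl; ring. }
  eapply Cconv_ext. intros N; symmetry; apply Hz. apply (Cconv_const_after (fun _ => C0) O). auto.
Qed.

Lemma Wtr_fin M n : (n <= M)%nat ->
  Wser (- A) (trc M a) n = Csum (fun l => Cmul (RtoC (kC (- A) l)) (a (n + l)%nat)) (M - n).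
Proof.
  intros H. unfold Wser. apply Cseries_eq.
  set (u := Csum (fun i => Cmul (RtoC (kC (- A) i)) (trc M a (n + i)%nat))).
  assert (E1 : u (M - n)%nat = Csum (fun l => Cmul (RtoC (kC (- A) l)) (a (n + l)%nat)) (M - n)).
  { unfold u. apply Csum_ext. intros i Hi. unfold trc.
    replace (n + i <=? M)%nat with true by (symmetry; apply Nat.leb_le; lia). reflexivity. }
  rewrite <- E1. apply Cconv_const_after. intros N HN. unfold u. apply Csum_zero_after; auto.
  intros i Hi. unfold trc. replace (n + i <=? M)%nat with false by (symmetry; apply Nat.leb_gt; lia).
  apply Cext; simpl; ring.
Qed.

Definition Pn N x := vsum (fun n => sc (Walpha A a n) (DeltaT A T n x)) N.

Lemma P_split N x : Pn N x = Sn N x +v vsum (fun n => sc (Wser (- A) (tlc N a) n) (DeltaT A T n x)) N.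
Proof.
  unfold Pn.
  rewrite (vsum_ext _ (fun n => sc (Wser (- A) (trc N a) n) (DeltaT A T n x) +v
                                sc (Wser (- A) (tlc N a) n) (DeltaT A T n x)) N).
  2: { intros i _. rewrite <- cb_scal_adds, <- W_split. reflexivity. }
  rewrite vsum_add. f_equal.
  rewrite (vsum_ext _ (fun m => sc (Csum (fun l => Cmul (RtoC (kC (- A) l)) (a (m + l)%nat)) (N - m))
                                 (Dv A (fun j => oppow T j x) m)) N).
  2: { intros i Hi. rewrite Wtr_fin by auto. rewrite D_eq. reflexivity. }
  rewrite phi_id. reflexivity.
Qed.

Lemma P_tl_bound N x :
  nrm (vsum (fun n => sc (Wser (- A) (tlc N a) n) (DeltaT A T n x)) N) <= C1 * E * tl N * nrm x.
Proof.
  eapply Rle_trans. apply vsum_norm.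
  pose proof (eapply_K := K_nonneg A T HT K HK). pose proof (cb_norm_nonneg X x).
  apply Rle_trans with (sum_f_R0 (fun n => (K * nrm x) * (kC (A + 1) n * Cmod (Wser (- A) (tlc N a) n))) N).
  { apply sum_Rle. intros n _. rewrite cb_norm_scal. pose proof (D_bound A T HA HT K HK n x).
    pose proof (Cmod_ge0 (Wser (- A) (tlc N a) n)).
    assert (Cmod (Wser (- A) (tlc N a) n) * nrm (DeltaT A T n x) <=
            Cmod (Wser (- A) (tlc N a) n) * (K * kC (A + 1) n * nrm x)) by (apply Rmult_le_compat_l; auto).
    lra. }
  rewrite sum_scal_l.
  pose proof (W_est A HA (tlc N a) Sa' (E * tl N) B (absS_tl N) HB (sum_tl_bound A HA a L HL N) N).
  unfold C1. replace (K * B * E * tl N * nrm x) with ((K * nrm x) * (B * (E * tl N))) by ring.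
  apply Rmult_le_compat_l. apply Rmult_le_pos; auto. exact H0.
Qed.

Lemma theta_bound N x : nrm (vsub (Pn N x) (Sdef x)) <= 2 * C1 * E * tl N * nrm x.
Proof.
  pose proof (vsub_tri (Pn N x) (Sn N x) (Sdef x)).
  rewrite P_split, vsub_addK in H. pose proof (P_tl_bound N x). pose proof (S_tail N x).
  rewrite P_split. lra.
Qed.

Lemma tl_nonneg M : 0 <= tl M.
Proof. apply tail_nonneg; auto. Qed.

Lemma E_nonneg : 0 <= E.
Proof. left; apply exp_pos. Qed.

Lemma S_series : opseries_conv (fun j => opscal (a j) (oppow T j)) Sdef.
Proof.
  unfold opseries_conv. apply (squeeze0 _ tl (C1 * E)).
  - intros n. split.
    + apply opnorm_nonneg_bop. apply bop_sub. apply bop_sum. intros i; apply bop_scal, bop_pow, HT. apply S_bop.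
    + apply opnorm_le. pose proof C1_nonneg. pose proof E_nonneg. pose proof (tl_nonneg n).
      apply Rmult_le_pos; auto. apply Rmult_le_pos; auto.
      intros x. unfold opsub. rewrite opsum_pt. apply S_tail.
  - apply tail_cv; auto.
Qed.

Lemma theta_series : opseries_conv (fun n => opscal (Walpha A a n) (DeltaT A T n)) Sdef.
Proof.
  unfold opseries_conv. apply (squeeze0 _ tl (2 * C1 * E)).
  - intros n. split.
    + apply opnorm_nonneg_bop. apply bop_sub. apply bop_sum. intros i; apply bop_scal, bop_D, HT. apply S_bop.
    + apply opnorm_le. pose proof C1_nonneg. pose proof E_nonneg. pose proof (tl_nonneg n).
      apply Rmult_le_pos; auto. apply Rmult_le_pos; auto. lra.
      intros x. unfold opsub. rewrite opsum_pt. apply theta_bound.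
  - apply tail_cv; auto.
Qed.

Lemma W_summable : Rsummable (fun n => kC (A + 1) n * Cmod (Walpha A a n)).
Proof.
  assert (Hb : forall N, sum_f_R0 (fun n => kC (A + 1) n * Cmod (Walpha A a n)) N <= B * Sa').
  { intros N. rewrite (sum_eq _ (fun n => kC (A + 1) n * Cmod (Wser (- A) a n))).
    apply (W_est A HA a Sa' Sa' B absS_a' HB). apply sum_a_bound; auto.
    intros i _. rewrite (Walpha_eq A a Sa' i HA absS_a'). reflexivity. }
  destruct (growing_cv (sum_f_R0 (fun n => kC (A + 1) n * Cmod (Walpha A a n)))) as [l Hl].
  - intros n. rewrite tech5. pose proof (kp_pos A HA (S n)). pose proof (Cmod_ge0 (Walpha A a (S n))).
    assert (0 <= kC (A + 1) (S n) * Cmod (Walpha A a (S n))) by (apply Rmult_le_pos; lra). lra.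
  - exists (B * Sa'). intros y [n ->]. apply Hb.
  - exists l; exact Hl.
Qed.

End Part3.

Theorem mainTheorem11 (X : CBanach) (alpha : R) (T : X -> X)
  (Halpha : 0 < alpha) (HT : is_bounded_op T) (HCa : Ca_bounded alpha T) :
  (exists K N, forall j, (j >= N)%nat -> opnorm (oppow T j) <= K * npow j alpha) /\
  (forall a : nat -> Cplx,
     Rsummable (fun j => npow j alpha * Cmod (a j)) ->
     Rsummable (fun n => kC (alpha + 1) n * Cmod (Walpha alpha a n)) /\
     exists S : X -> X, is_bounded_op S /\
       opseries_conv (fun j => opscal (a j) (oppow T j)) S /\
       opseries_conv (fun n => opscal (Walpha alpha a n) (DeltaT alpha T n)) S).
Proof.
  destruct HCa as [K HK].
  destruct (kn_bound alpha Halpha) as [B [HB0 HB]].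
  pose proof (K_nonneg alpha T HT K HK) as HK0.
  split.
  - exists (K * B * exp alpha), 1%nat. intros j Hj. destruct j. lia.
    apply Rle_trans with (K * B * kC (alpha + 1) (S j)).
    + apply opnorm_le. apply Rmult_le_pos. apply Rmult_le_pos; auto. left; apply kp_pos; auto.
      intros x. apply (T_bound alpha T Halpha HT K HK B HB).
    + replace (K * B * exp alpha * npow (S j) alpha) with ((K * B) * (exp alpha * npow (S j) alpha)) by ring.
      apply Rmult_le_compat_l. apply Rmult_le_pos; auto.
      apply kp_exp; auto.
  - intros a [L HL]. split.
    + apply (W_summable alpha Halpha B HB a L HL).
    + exists (Sdef alpha T Halpha HT K HK B HB0 HB a L HL). split; [|split].
      * apply S_bop.
      * apply S_series.
      * apply theta_series.
Qed.
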